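(* Let $A\in\mathbb{R}^{n\times n}$ be nonsingular with $A\geq 0$ and $A^{-1}\geq 0$, and let $(U_k^{(i)},V_k^{(i)},E_k)_{k=1}^{p}$, $i=1,2$, be two weak regular multisplittings of $A$ (with the same weighting matrices $E_k$). If $[U_k^{(1)}]^{-1}\geq[U_k^{(2)}]^{-1}$ for each $k=1,\ldots,p$, then $\rho(H_1)\leq\rho(H_2)<1$, where $H_i=\sum_{k=1}^{p}E_k[U_k^{(i)}]^{-1}V_k^{(i)}$ for $i=1,2$.
   Context: Inequalities are entrywise; $\rho(\cdot)$ is the spectral radius. A splitting $A=U-V$ of $A\in\mathbb{R}^{n\times n}$ is weak regular if $U$ is nonsingular, $U^{-1}\geq 0$ and $U^{-1}V\geq 0$. A weak regular multisplitting of $A$ is a triplet $(U_k,V_k,E_k)_{k=1}^{p}$ where each $A=U_k-V_k$ is a weak regular splitting and each $E_k\geq 0$ is an $n\times n$ diagonal matrix with $\sum_{k=1}^{p}E_k=I$. *)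

(* Defs.v *)
From HB Require Import structures.
From mathcomp Require Import all_boot all_order all_algebra.
From mathcomp Require Import reals.
From mathcomp Require Import complex.
Set Implicit Arguments. Unset Strict Implicit. Unset Printing Implicit Defensive.
Import Order.TTheory GRing.Theory Num.Theory.
Local Open Scope ring_scope.

Definition mx_le (R : realType) (m n : nat) (A B : 'M[R]_(m, n)) : Prop :=
  forall i j, A i j <= B i j.

Definition mx_nonneg (R : realType) (m n : nat) (A : 'M[R]_(m, n)) : Prop :=
  mx_le 0 A.

Definition complexify (R : realType) (n : nat) (A : 'M[R]_n) : 'M[R[i]]_n :=
  map_mx (fun x => (x%:C)%C) A.

(* The list (with multiplicity) of the complex eigenvalues of A,
   i.e. the roots of its characteristic polynomial in R[i]. *)
Definition eigenvalues (R : realType) (n : nat) (A : 'M[R]_n) : seq R[i] :=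
  sval (closed_field_poly_normal (char_poly (complexify A))).

(* Spectral radius: max modulus of the eigenvalues (0 when n = 0). *)
Definition spectral_radius (R : realType) (n : nat) (A : 'M[R]_n) : R :=
  \big[Num.max/0]_(z <- eigenvalues A) ComplexField.Normc.normc z.

Definition weak_regular_splitting (R : realType) (n : nat) (A U V : 'M[R]_n) : Prop :=
  [/\ A = U - V, U \in unitmx, mx_nonneg (invmx U) & mx_nonneg (invmx U *m V)].

Definition weak_regular_multisplitting (R : realType) (n p : nat)
    (A : 'M[R]_n) (U V E : 'I_p -> 'M[R]_n) : Prop :=
  [/\ forall k, weak_regular_splitting A (U k) (V k),
      forall k, is_diag_mx (E k),
      forall k, mx_nonneg (E k)
    & \sum_(k < p) E k = 1%:M].

Definition multisplitting_iter (R : realType) (n p : nat)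
    (U V E : 'I_p -> 'M[R]_n) : 'M[R]_n :=
  \sum_(k < p) (E k *m (invmx (U k) *m V k)).

(* Main.v *)
Require Import Defs.
From HB Require Import structures.
From mathcomp Require Import all_boot all_order all_algebra.
From mathcomp Require Import reals complex polyrcf boolp classical_sets.
From mathcomp Require Import ring lra.
Set Implicit Arguments. Unset Strict Implicit. Unset Printing Implicit Defensive.
Import Order.TTheory GRing.Theory Num.Theory.
Local Open Scope ring_scope.

Lemma Zlemma (R : realFieldType) n (Q : 'M[R]_n) (w x : 'cV[R]_n) :
  (forall i j, i != j -> Q i j <= 0) -> (forall i, 0 < w i 0) ->
  (forall i, 0 < (Q *m w) i 0) ->
  (forall i, 0 <= (Q *m x) i 0) -> forall i, 0 <= x i 0.
Proof.
move=> Qoff wpos Qw Qx i1.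
rewrite leNgt; apply/negP => xneg.
have [i _ Hmin] := @arg_minP _ R _ i1 xpredT (fun i => x i 0 / w i 0) isT.
set t := - (x i 0 / w i 0).
have tpos : 0 < t.
  rewrite /t oppr_gt0; apply: (le_lt_trans (Hmin i1 isT)).
  by rewrite pmulr_llt0 ?invr_gt0.
have yge : forall j, 0 <= x j 0 + t * w j 0.
  move=> j; have := Hmin j isT; rewrite /t => h.
  rewrite mulNr subr_ge0 -ler_pdivlMr //.
have yi : x i 0 + t * w i 0 = 0.
  by rewrite /t mulNr divfK ?subrr // gt_eqF.
have : 0 < (Q *m x) i 0 + t * (Q *m w) i 0.
  by apply: ltr_wpDl; [exact: Qx | rewrite mulr_gt0].
rewrite !mxE mulr_sumr -big_split /= ltNge => /negP H; apply: H.
apply: sumr_le0 => j _.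
rewrite mulrCA -mulrDr.
have [->|ij] := eqVneq j i; first by rewrite yi mulr0.
apply: mulr_le0_ge0; [apply: Qoff; by rewrite eq_sym | exact: yge].
Qed.

Lemma horner_charpoly (F : comNzRingType) n (A : 'M[F]_n) (x : F) :
  (char_poly A).[x] = \det (x%:M - A).
Proof.
rewrite /char_poly -[_.[x]]/(horner_eval x _) -det_map_mx; congr (\det _).
apply/matrixP => i j; rewrite !mxE rmorphB rmorphMn /= !horner_evalE.
by rewrite hornerX hornerC.
Qed.

Lemma eig_root (R : realType) n (M : 'M[R]_n) (l : R[i]) :
  l \in eigenvalues M -> (char_poly (complexify M)).[l] = 0.
Proof.
rewrite /eigenvalues; case: closed_field_poly_normal => s /= Hs ls.
apply/eqP; rewrite -/(root _ l) Hs rootZ ?root_prod_XsubC //.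
by rewrite (monicP (char_poly_monic _)) oner_eq0.
Qed.

Lemma eig_vec (R : realType) n (M : 'M[R]_n) (l : R[i]) :
  l \in eigenvalues M ->
  exists2 z : 'cV[R[i]]_n, z != 0 & complexify M *m z = l *: z.
Proof.
move=> /eig_root; rewrite horner_charpoly -det_tr => /eqP/det0P[v v0 hv].
exists v^T; first by rewrite trmx_eq0.
apply/eqP; rewrite -subr_eq0 -[l *: v^T]mul_scalar_mx -mulmxBl.
have h2 : (l%:M - complexify M) *m v^T = 0.
  by rewrite -(trmxK (_ *m _)) trmx_mul trmxK hv trmx0.
by rewrite -opprB mulNmx h2 oppr0.
Qed.

Lemma real_root_eig (R : realType) n (M : 'M[R]_n) (t : R) :
  (char_poly M).[t] = 0 -> (t%:C)%C \in eigenvalues M.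
Proof.
move=> ht; rewrite /eigenvalues; case: closed_field_poly_normal => s /= Hs.
have : root (char_poly (complexify M)) (t%:C)%C.
  by rewrite /complexify -map_char_poly rootE horner_map ht rmorph0.
by rewrite Hs rootZ ?root_prod_XsubC // (monicP (char_poly_monic _)) oner_eq0.
Qed.

Lemma normC_eq (R : realType) (z : R[i]) : `|z| = ((ComplexField.Normc.normc z)%:C)%C.
Proof. by case: z. Qed.

Lemma map_charpoly_mx (F : comNzRingType) n (A : 'M[F]_n) (x : F) :
  map_mx (horner_eval x) (char_poly_mx A) = x%:M - A.
Proof.
apply/matrixP => i j; rewrite !mxE rmorphB rmorphMn /= !horner_evalE.
by rewrite hornerX hornerC.
Qed.

Lemma invmx_entry (R : realType) n (M : 'M[R]_n) (u : R) i j :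
  (char_poly M).[u] != 0 ->
  invmx (u%:M - M) i j = ((\adj (char_poly_mx M)) i j).[u] / (char_poly M).[u].
Proof.
move=> hu; have hU : u%:M - M \in unitmx by rewrite unitmxE unitfE -horner_charpoly.
rewrite /invmx hU mxE horner_charpoly mulrC; congr (_ * _).
by rewrite -map_charpoly_mx -map_mx_adj mxE.
Qed.

Lemma poly_right_neg (R : realType) (s : {poly R}) (t : R) :
  s.[t] < 0 -> exists2 y, t < y & s.[y] < 0.
Proof.
move=> st.
have s0 : s != 0 by apply: contraTneq st => ->; rewrite horner0 ltxx.
have t1 : t < t + 1 by rewrite ltrDl ltr01.
have [y hy] := @neighpr_wit _ s t (t + 1) t1 s0.
exists y; first by move: hy; rewrite /neighpr in_itv /= => /andP[].
have := sgr_neighprN (ltr0_neq0 st) hy.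
rewrite (ltr0_sg st) => h.
by rewrite -sgr_cp0 h eqxx.
Qed.

Lemma PF_lower (R : realType) n (M : 'M[R]_n) (x : 'cV[R]_n) (r : R) :
  mx_nonneg M -> (forall i, 0 <= x i 0) -> x != 0 ->
  (forall i, r * x i 0 <= (M *m x) i 0) ->
  exists2 t, r <= t & (char_poly M).[t] = 0.
Proof.
move=> Mge0 xge0 x0 Mx.
have Mij : forall i j, 0 <= M i j by move=> i j; have := Mge0 i j; rewrite mxE.
have [i1 xi1] : exists i, x i 0 != 0.
  case: (pselect (exists i, x i 0 != 0)) => // H; exfalso; move/negP: x0; apply.
  apply/eqP/matrixP => i j; rewrite (ord1 j) mxE; apply/eqP/negPn/negP => h.
  by apply: H; exists i.
case: (pselect (exists2 t, r <= t & (char_poly M).[t] = 0)) => // Hno.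
have Hnz : forall t, r <= t -> (char_poly M).[t] != 0.
  by move=> t rt; apply/eqP => h; apply: Hno; exists t.
pose P t := exists w : 'cV[R]_n, (forall i, 0 < w i 0) /\
   (forall i, 0 < ((t%:M - M) *m w) i 0).
have QE : forall t (w : 'cV[R]_n) i, ((t%:M - M) *m w) i 0 = t * w i 0 - (M *m w) i 0.
  by move=> t w i; rewrite mulmxBl mul_scalar_mx !mxE.
have Pmono : forall t u, P t -> t <= u -> P u.
  move=> t u [w [wpos Qw]] tu; exists w; split => // i.
  rewrite QE; have := Qw i; rewrite QE => h.
  apply: (lt_le_trans h); rewrite lerD2r ler_wpM2r // ltW //.
have Pr : ~ P r.
  move=> [w [wpos Qw]].
  have := @Zlemma R n (r%:M - M) w (- x).
  have off : forall i j, i != j -> (r%:M - M) i j <= 0.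
    by move=> i j ij; rewrite !mxE (negbTE ij) mulr0n sub0r oppr_le0.
  move=> /(_ off wpos Qw) => H.
  have : 0 <= - x i1 0.
    have := H _ i1; rewrite mxE //.
    move=> h; apply: h => i.
    by rewrite mulmxN [X in 0 <= X]mxE QE oppr_ge0 subr_le0; exact: Mx.
  by rewrite oppr_ge0 => h; move: xi1; rewrite eq_le h xge0.
have Pbig : P (1 + \sum_i \sum_j M i j).
  exists (const_mx 1); split => [i|i]; first by rewrite mxE ltr01.
  have e : (M *m (const_mx 1 : 'cV[R]_n)) i 0 = \sum_j M i j.
    by rewrite mxE; apply: eq_bigr => j _; rewrite mxE mulr1.
  rewrite QE e mxE mulr1 subr_gt0 [X in _ < 1 + X](bigD1 i) //=.
  have : 0 <= \sum_(i0 < n | i0 != i) \sum_(j < n) M i0 j.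
    by apply: sumr_ge0 => k _; exact: sumr_ge0.
  lra.
have offQ : forall u i j, i != j -> (u%:M - M) i j <= 0.
  by move=> u i j ij; rewrite !mxE (negbTE ij) mulr0n sub0r oppr_le0.
have Popen : forall t, P t -> exists2 d, 0 < d & P (t - d).
  move=> t [w [wpos Qw]].
  pose a i := ((t%:M - M) *m w) i 0 / w i 0.
  have [im _ Hm] := @arg_minP _ R _ i1 xpredT a isT.
  have ha : 0 < a im by rewrite divr_gt0.
  exists (a im / 2); first lra.
  exists w; split => // i.
  have e : t * w i 0 - (M *m w) i 0 = a i * w i 0.
    by rewrite /a QE divfK // gt_eqF.
  have hm : a im <= a i := Hm i isT.
  have h2 : 0 < (a i - a im / 2) * w i 0 by rewrite mulr_gt0 //; lra.
  rewrite QE; apply: (lt_le_trans h2); rewrite le_eqVlt; apply/orP; left; apply/eqP.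
  by rewrite mulrBl -e mulrBl; ring.
have unitQ : forall u, r <= u -> u%:M - M \in unitmx.
  by move=> u ru; rewrite unitmxE unitfE -horner_charpoly Hnz.
have Pclosed : forall t, r <= t -> (forall u, t < u -> P u) -> P t.
  move=> t rt Hu.
  have Nu : forall u, t < u -> forall i j, 0 <= invmx (u%:M - M) i j.
    move=> u tu i j; have [w [wpos Qw]] := Hu u tu.
    have hU := unitQ u (le_trans rt (ltW tu)).
    have H := @Zlemma R n (u%:M - M) w (col j (invmx (u%:M - M))) (offQ u) wpos Qw.
    suff : 0 <= col j (invmx (u%:M - M)) i 0 by rewrite mxE.
    apply: H.
    move=> k; rewrite colE mulmxA mulmxV // mul1mx mxE.
    by case: eqP; rewrite ?ler01 ?lexx.
  have hU0 := unitQ t rt.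
  have N0 : forall i j, 0 <= invmx (t%:M - M) i j.
    move=> i j; rewrite leNgt; apply/negP => hneg.
    rewrite invmx_entry ?Hnz // in hneg.
    move: hneg; set p := (\adj (char_poly_mx M)) i j; set q := char_poly M => hneg.
    have key : forall y, q.[y] != 0 -> (p * q).[y] = p.[y] / q.[y] * (q.[y] ^+ 2).
      by move=> y qy; rewrite hornerM expr2 mulrA divfK.
    have sq : forall y, q.[y] != 0 -> 0 < q.[y] ^+ 2.
      by move=> y qy; rewrite lt_def sqr_ge0 andbT sqrf_eq0.
    have st : (p * q).[t] < 0 by rewrite key ?Hnz // pmulr_llt0 ?sq ?Hnz.
    have [y ty sy] := poly_right_neg st.
    have ry : r <= y by apply: le_trans rt (ltW ty).
    have := Nu y ty i j; rewrite invmx_entry ?Hnz // => hy.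
    move: sy; rewrite key ?Hnz // pmulr_llt0 ?sq ?Hnz //.
    by rewrite ltNge hy.
  exists (invmx (t%:M - M) *m const_mx 1); split => i.
    have e : (invmx (t%:M - M) *m (const_mx 1 : 'cV[R]_n)) i 0 = \sum_j invmx (t%:M - M) i j.
      by rewrite mxE; apply: eq_bigr => j _; rewrite mxE mulr1.
    rewrite e lt_def andbC sumr_ge0 /=; last by move=> j _; exact: N0.
    apply/negP => /eqP h0.
    have z := psumr_eq0P (fun j _ => N0 i j) h0.
    have := congr1 (fun m : 'M[R]_n => m i i) (mulVmx hU0).
    rewrite !mxE eqxx big1 ?mulr1n => [/esym/eqP|j _]; first by rewrite oner_eq0.
    by rewrite z // mul0r.
  by rewrite mulmxA mulmxV // mul1mx mxE ltr01.
pose S : set R := fun u => r <= u /\ (forall v, u <= v -> P v).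
pose big := 1 + \sum_i \sum_j M i j.
have Sne : S (Num.max r big).
  split; first by rewrite le_max lexx.
  by move=> v hv; apply: Pmono Pbig (le_trans _ hv); rewrite le_max lexx orbT.
have Slb : lbound S r by move=> u [].
have hinf : has_inf S by split; [exists (Num.max r big) | exists r].
pose t0 := inf S.
have rt0 : r <= t0 by apply: lb_le_inf => //; exists (Num.max r big).
have Hu : forall u, t0 < u -> P u.
  move=> u tu; have ep : 0 < u - t0 by rewrite subr_gt0.
  have [e [re He] eu] := inf_adherent ep hinf.
  apply: He; lra.
have Pt0 := Pclosed t0 rt0 Hu.
case: (ltrP r t0) => [rlt | t0le].
  have [d d0 Pd] := Popen t0 Pt0.
  pose d' := Num.min d (t0 - r).
  have d'pos : 0 < d' by rewrite lt_min d0 subr_gt0.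
  have d'd : d' <= d by rewrite ge_min lexx.
  have d'r : d' <= t0 - r by rewrite ge_min lexx orbT.
  have Sd : S (t0 - d').
    split; first lra.
    by move=> v hv; apply: Pmono Pd _; lra.
  have := ge_inf (proj2 hinf) Sd; rewrite -/t0; lra.
have e0 : t0 = r by apply/le_anti; rewrite t0le rt0.
by exfalso; apply: Pr; rewrite -e0.
Qed.

Lemma nonnegE (R : realType) m n (A : 'M[R]_(m, n)) : mx_nonneg A -> forall i j, 0 <= A i j.
Proof. by move=> h i j; have := h i j; rewrite mxE. Qed.

Lemma nonnegI (R : realType) m n (A : 'M[R]_(m, n)) : (forall i j, 0 <= A i j) -> mx_nonneg A.
Proof. by move=> h i j; rewrite mxE. Qed.

Lemma nonneg_mul (R : realType) m n q (A : 'M[R]_(m, n)) (B : 'M[R]_(n, q)) :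
  mx_nonneg A -> mx_nonneg B -> mx_nonneg (A *m B).
Proof.
move=> /nonnegE hA /nonnegE hB; apply: nonnegI => i j; rewrite mxE.
by apply: sumr_ge0 => k _; apply: mulr_ge0.
Qed.

Lemma nonneg_sum (R : realType) n p (F : 'I_p -> 'M[R]_n) :
  (forall k, mx_nonneg (F k)) -> mx_nonneg (\sum_k F k).
Proof.
move=> h; apply: nonnegI => i j; rewrite summxE.
by apply: sumr_ge0 => k _; apply: nonnegE.
Qed.

Lemma diag_mul (R : realType) n q (E : 'M[R]_n) (X : 'M[R]_(n, q)) i j :
  is_diag_mx E -> (E *m X) i j = E i i * X i j.
Proof.
move=> /is_diag_mxP hE; rewrite mxE (bigD1 i) //= big1 ?addr0 // => k ki.
by rewrite hE ?mul0r // eq_sym.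
Qed.

Lemma rowsum_pos (R : realType) n (N B : 'M[R]_n) :
  mx_nonneg N -> N *m B = 1%:M -> forall i, 0 < (N *m (const_mx 1 : 'cV[R]_n)) i 0.
Proof.
move=> /nonnegE N0 hB i.
have e : (N *m (const_mx 1 : 'cV[R]_n)) i 0 = \sum_j N i j.
  by rewrite mxE; apply: eq_bigr => j _; rewrite mxE mulr1.
rewrite e lt_def andbC sumr_ge0 /=; last by move=> j _; exact: N0.
apply/negP => /eqP h0.
have z := psumr_eq0P (fun j _ => N0 i j) h0.
have := congr1 (fun m : 'M[R]_n => m i i) hB.
rewrite !mxE eqxx big1 ?mulr1n => [/esym/eqP|j _]; first by rewrite oner_eq0.
by rewrite z // mul0r.
Qed.

Lemma triangle (R : realType) n (M : 'M[R]_n) (l : R[i]) (z : 'cV[R[i]]_n) :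
  mx_nonneg M -> complexify M *m z = l *: z ->
  forall i, ComplexField.Normc.normc l * ComplexField.Normc.normc (z i 0) <=
    (M *m \col_j ComplexField.Normc.normc (z j 0)) i 0.
Proof.
move=> /nonnegE M0 hz i.
have := congr1 (fun m : 'cV[R[i]]_n => m i 0) hz; rewrite /= !mxE => e.
rewrite -lecR rmorphM /= -!normC_eq -normrM -e.
apply: le_trans (ler_norm_sum _ _ _) _.
rewrite rmorph_sum /=; apply: ler_sum => j _; rewrite !mxE normrM rmorphM /= -normC_eq.
by rewrite ger0_norm // -(rmorph0 (real_complex R)) lecR.
Qed.

Lemma iterE (R : realType) n p (A : 'M[R]_n) (U V E : 'I_p -> 'M[R]_n) :
  weak_regular_multisplitting A U V E ->
  multisplitting_iter U V E = 1%:M - (\sum_k E k *m invmx (U k)) *m A.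
Proof.
move=> [hs _ _ hE]; rewrite /multisplitting_iter -hE mulmx_suml -sumrB.
apply: eq_bigr => k _; have [eA hU _ _] := hs k.
have -> : V k = U k - A by rewrite eA opprB addrC subrK.
by rewrite mulmxBr mulVmx // mulmxBr mulmx1 mulmxA.
Qed.

Lemma normc_ge0 (R : realType) (z : R[i]) : 0 <= ComplexField.Normc.normc z.
Proof. by case: z => a b; exact: sqrtr_ge0. Qed.

Lemma absvec (R : realType) n (z : 'cV[R[i]]_n) :
  z != 0 -> \col_j ComplexField.Normc.normc (z j 0) != 0.
Proof.
move=> z0; apply/negP => /eqP a0; move/negP: z0; apply; apply/eqP/matrixP => i j.
rewrite (ord1 j) mxE; apply: ComplexField.Normc.eq0_normc.
by have := congr1 (fun m : 'cV[R]_n => m i 0) a0; rewrite !mxE.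
Qed.

Theorem corollary5p14 (R : realType) (n p : nat) (A : 'M[R]_n)
    (U1 V1 U2 V2 E : 'I_p -> 'M[R]_n) :
  A \in unitmx -> mx_nonneg A -> mx_nonneg (invmx A) ->
  weak_regular_multisplitting A U1 V1 E ->
  weak_regular_multisplitting A U2 V2 E ->
  (forall k, mx_le (invmx (U2 k)) (invmx (U1 k))) ->
  spectral_radius (multisplitting_iter U1 V1 E)
    <= spectral_radius (multisplitting_iter U2 V2 E)
  /\ spectral_radius (multisplitting_iter U2 V2 E) < 1.
Proof.
move=> Aunit A0 Ai0 W1 W2 Hle.
have nonnegH : forall U V, weak_regular_multisplitting A U V E ->
    mx_nonneg (multisplitting_iter U V E).
  move=> U V [hs _ hE0 _]; apply: nonneg_sum => k; apply: nonneg_mul => //.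
  by case: (hs k).
have H1n := nonnegH _ _ W1; have H2n := nonnegH _ _ W2.
have H1E := iterE W1; have H2E := iterE W2.
set H1 := multisplitting_iter U1 V1 E in H1n H1E *.
set H2 := multisplitting_iter U2 V2 E in H2n H2E *.
set T1 := \sum_k E k *m invmx (U1 k) in H1E.
set T2 := \sum_k E k *m invmx (U2 k) in H2E.
have [_ Ediag E0 hE] := W1.
have Tdiff : mx_nonneg (T1 - T2).
  have -> : T1 - T2 = \sum_k E k *m (invmx (U1 k) - invmx (U2 k)).
    by rewrite /T1 /T2 -sumrB; apply: eq_bigr => k _; rewrite mulmxBr.
  apply: nonneg_sum => k; apply: nonneg_mul => //.
  by apply: nonnegI => i j; rewrite !mxE subr_ge0; apply: Hle.
have cmp : forall y : 'cV[R]_n, (forall i, 0 <= y i 0) ->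
    forall i, (H1 *m y) i 0 <= (H2 *m y) i 0.
  move=> y y0 i.
  have e : H2 *m y - H1 *m y = (T1 - T2) *m (A *m y).
    rewrite -mulmxBl mulmxA; congr (_ *m _).
    by rewrite H1E H2E opprB addrC addrA subrK mulmxBl.
  have Y : mx_nonneg y by apply: nonnegI => i' j; rewrite (ord1 j).
  have := nonnegE (nonneg_mul Tdiff (nonneg_mul A0 Y)) i 0.
  by rewrite -e mxE [X in _ + X]mxE subr_ge0.
have rho_ge0 : 0 <= spectral_radius H2.
  rewrite /spectral_radius; apply: (big_ind (fun v => 0 <= v)) => //.
    by move=> a b ha hb; rewrite le_max ha.
  by move=> l _; exact: normc_ge0.
have in_le : forall l, l \in eigenvalues H2 ->
    ComplexField.Normc.normc l <= spectral_radius H2.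
  by move=> l ls; rewrite /spectral_radius; apply: le_bigmax_seq.
split.
  rewrite {1}/spectral_radius big_seq.
  apply: (big_ind (fun v => v <= spectral_radius H2)).
  - exact: rho_ge0.
  - by move=> a b ha hb; rewrite ge_max ha.
  move=> l ls; have [z z0 hz] := eig_vec ls.
  set a := \col_j ComplexField.Normc.normc (z j 0).
  have a0 : forall i, 0 <= a i 0 by move=> i; rewrite mxE normc_ge0.
  have anz : a != 0 by apply: absvec.
  have tri := triangle H1n hz.
  have hx : forall i, ComplexField.Normc.normc l * a i 0 <= (H2 *m a) i 0.
    move=> i; apply: le_trans (cmp a a0 i); rewrite mxE; exact: tri.
  have [t lt tr] := PF_lower H2n a0 anz hx.
  apply: le_trans (in_le _ (real_root_eig tr)).
  rewrite /= expr0n addr0 sqrtr_sqr; exact: le_trans lt (ler_norm t).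
have [hs2 _ _ _] := W2.
have QE : 1%:M - H2 = T2 *m A by rewrite H2E opprB addrC subrK.
pose w := invmx A *m (const_mx 1 : 'cV[R]_n).
have wpos : forall i, 0 < w i 0 by move=> i; rewrite /w; exact: (rowsum_pos Ai0 (mulVmx Aunit)).
have Qw : forall i, 0 < ((1%:M - H2) *m w) i 0.
  move=> i; rewrite QE /w mulmxA -[T2 *m A *m _]mulmxA mulmxV // mulmx1.
  rewrite /T2 mulmx_suml summxE.
  have rk : forall k, 0 < (invmx (U2 k) *m (const_mx 1 : 'cV[R]_n)) i 0.
    move=> k; have [_ hU hUi _] := hs2 k.
    exact: (rowsum_pos hUi (mulVmx hU)).
  have term : forall k, (E k *m invmx (U2 k) *m (const_mx 1 : 'cV[R]_n)) i 0
      = E k i i * (invmx (U2 k) *m (const_mx 1 : 'cV[R]_n)) i 0.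
    by move=> k; rewrite -mulmxA diag_mul.
  rewrite (eq_bigr _ (fun k _ => term k)).
  have Eii : \sum_k E k i i = 1.
    by have := congr1 (fun m : 'M[R]_n => m i i) hE; rewrite summxE mxE eqxx.
  have tge : forall k, 0 <= E k i i * (invmx (U2 k) *m (const_mx 1 : 'cV[R]_n)) i 0.
    by move=> k; rewrite mulr_ge0 ?(nonnegE (E0 k)) // ltW.
  rewrite lt_def andbC sumr_ge0 /=; last by move=> k _; exact: tge.
  apply/negP => /eqP h0.
  have z := psumr_eq0P (fun k _ => tge k) h0.
  move: Eii; rewrite big1 => [/eqP|k _]; first by rewrite eq_sym oner_eq0.
  by have /eqP := z k isT; rewrite mulf_eq0 (gt_eqF (rk k)) orbF => /eqP.
have off : forall i j, i != j -> (1%:M - H2) i j <= 0.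
  move=> i j ij; rewrite !mxE (negbTE ij) mulr0n sub0r oppr_le0.
  exact: (nonnegE H2n).
rewrite /spectral_radius big_seq.
apply: (big_ind (fun v => v < 1)).
- exact: ltr01.
- by move=> a b ha hb; rewrite gt_max ha.
move=> l ls; rewrite ltNge; apply/negP => l1.
have [z z0 hz] := eig_vec ls.
set a := \col_j ComplexField.Normc.normc (z j 0).
have a0 : forall i, 0 <= a i 0 by move=> i; rewrite mxE normc_ge0.
have anz : a != 0 by apply: absvec.
have tri := triangle H2n hz.
have ha : forall i, a i 0 <= (H2 *m a) i 0.
  move=> i; apply: le_trans (tri i); rewrite [a i 0]mxE.
  by rewrite -subr_ge0 -{2}[Normc.normc (z i 0)]mul1r -mulrBl mulr_ge0 ?subr_ge0 ?normc_ge0.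
have Z := Zlemma off wpos Qw (x := - a).
move/negP: anz; apply; apply/eqP/matrixP => i j; rewrite (ord1 j) [RHS]mxE.
apply/eqP; rewrite eq_le a0 andbT -oppr_ge0.
have := Z _ i; rewrite mxE; apply => k.
rewrite mulmxN mulmxBl mul1mx opprB [X in 0 <= X]mxE [X in 0 <= _ + X]mxE subr_ge0.
exact: ha.
Qed.
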